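(* $C_{U(25)^2}(25)\le 9$; that is, every sequence of length $9$ in $\mathbb Z_{25}$ has a $U(25)^2$-weighted zero-sum subsequence consisting of consecutive terms.
   Context: $\mathbb Z_{25}=\mathbb Z/25\mathbb Z$, $U(25)$ its group of units, $U(25)^2=\{x^2:x\in U(25)\}$. For $A\subseteq\mathbb Z_m$, a sequence $(y_1,\dots,y_t)$ ($t\ge1$) is an $A$-weighted zero-sum sequence if there exist $a_i\in A$ with $\sum a_iy_i=0$. $C_A(m)$ is the least positive integer $t$ such that every sequence of length $t$ in $\mathbb Z_m$ has a nonempty subsequence of consecutive terms that is an $A$-weighted zero-sum sequence. *)

(* Defs.v *)
From mathcomp Require Import all_boot all_order all_algebra.
Set Implicit Arguments. Unset Strict Implicit. Unset Printing Implicit Defensive.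
Import GRing.Theory.
Local Open Scope ring_scope.

Definition unitsZ (m : nat) : pred 'Z_m := fun x => x \is a GRing.unit.

Definition unit_squares (m : nat) : pred 'Z_m :=
  fun y => [exists x : 'Z_m, (x \is a GRing.unit) && (y == x ^+ 2)].

Definition weighted_zero_sum (m : nat) (A : pred 'Z_m) (s : seq 'Z_m) : Prop :=
  exists a : seq 'Z_m, [/\ size a = size s, all A a &
    \sum_(i < size s) a`_i * s`_i = 0].

(* C_A(m) is the least positive t with this property. *)
Definition consec_wzs_property (m : nat) (A : pred 'Z_m) (t : nat) : Prop :=
  forall s : seq 'Z_m, size s = t ->
    exists i j : nat, [/\ (i < j)%N, (j <= t)%N &
      weighted_zero_sum A (drop i (take j s))].

(* Main.v *)
Require Import Defs.
From mathcomp Require Import all_boot all_order all_algebra.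
Set Implicit Arguments. Unset Strict Implicit. Unset Printing Implicit Defensive.
Import GRing.Theory.
Local Open Scope ring_scope.

Definition Zl : seq 'Z_25 := [seq inZp i | i <- iota 0 25].

Lemma mem_Zl (x : 'Z_25) : x \in Zl.
Proof.
apply/mapP; exists (val x); first by rewrite mem_iota /= ltn_ord.
by apply: val_inj; rewrite /= modn_small // ltn_ord.
Qed.

Definition cls (x : 'Z_25) : nat :=
  let n := nat_of_ord x in
  if n == 0%N then 0%N else if (n %% 5 == 0)%N then (if (n == 5) || (n == 20) then 3 else 4)%N
  else if (n %% 5 == 1)%N || (n %% 5 == 4)%N then 1%N else 2%N.
Definition inQ (x : 'Z_25) : bool := cls x == 1%N.

Definition state := (bool * bool * bool * bool)%type.
Definition memS (M : state) (o : nat) : bool :=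
  let: (b1, b2, b3, b4) := M in
  match o with 1 => b1 | 2 => b2 | 3 => b3 | 4 => b4 | _ => false end.
Definition inD (M : state) (v : 'Z_25) : bool := (v == 0) || memS M (cls v).
Definition Qlist : seq 'Z_25 := [seq inZp i | i <- [:: 1; 4; 6; 9; 11; 14; 16; 19; 21; 24]%N].
Definition covers (M : state) (y t : 'Z_25) : bool :=
  has (fun q => inD M (t - q * y)) Qlist.
Definition okT (M : state) (c : nat) (p : state * bool) : bool :=
  all (fun y => (cls y == c) ==>
     ((p.2 ==> covers M y 0) &&
      all (fun t => memS p.1 (cls t) ==> covers M y t) Zl)) Zl.
Definition table (M : state) (c : nat) : state * bool :=
  match M, c with
  | (false, false, false, false), 0 => ((false, false, false, false), true)
  | (false, false, false, false), 1 => ((true, false, false, false), false)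
  | (false, false, false, false), 2 => ((false, true, false, false), false)
  | (false, false, false, false), 3 => ((false, false, true, false), false)
  | (false, false, false, false), 4 => ((false, false, false, true), false)
  | (false, false, false, true), 0 => ((false, false, false, true), true)
  | (false, false, false, true), 1 => ((true, false, false, false), false)
  | (false, false, false, true), 2 => ((false, true, false, false), false)
  | (false, false, false, true), 3 => ((false, false, true, true), false)
  | (false, false, false, true), 4 => ((false, false, true, true), true)
  | (false, false, true, false), 0 => ((false, false, true, false), true)
  | (false, false, true, false), 1 => ((true, false, false, false), false)
  | (false, false, true, false), 2 => ((false, true, false, false), false)
  | (false, false, true, false), 3 => ((false, false, true, true), true)
  | (false, false, true, false), 4 => ((false, false, true, true), false)
  | (false, false, true, true), 0 => ((false, false, true, true), true)
  | (false, false, true, true), 1 => ((true, false, false, false), false)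
  | (false, false, true, true), 2 => ((false, true, false, false), false)
  | (false, false, true, true), 3 => ((false, false, true, true), true)
  | (false, false, true, true), 4 => ((false, false, true, true), true)
  | (false, true, false, false), 0 => ((false, true, false, false), true)
  | (false, true, false, false), 1 => ((true, true, false, false), false)
  | (false, true, false, false), 2 => ((true, true, true, true), true)
  | (false, true, false, false), 3 => ((false, true, true, false), false)
  | (false, true, false, false), 4 => ((false, true, false, true), false)
  | (false, true, false, true), 0 => ((false, true, false, true), true)
  | (false, true, false, true), 1 => ((true, true, false, false), false)
  | (false, true, false, true), 2 => ((true, true, true, true), true)
  | (false, true, false, true), 3 => ((false, true, true, true), false)
  | (false, true, false, true), 4 => ((false, true, true, true), true)
  | (false, true, true, false), 0 => ((false, true, true, false), true)
  | (false, true, true, false), 1 => ((true, true, false, false), false)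
  | (false, true, true, false), 2 => ((true, true, true, true), true)
  | (false, true, true, false), 3 => ((false, true, true, true), true)
  | (false, true, true, false), 4 => ((false, true, true, true), false)
  | (false, true, true, true), 0 => ((false, true, true, true), true)
  | (false, true, true, true), 1 => ((true, true, false, false), false)
  | (false, true, true, true), 2 => ((true, true, true, true), true)
  | (false, true, true, true), 3 => ((false, true, true, true), true)
  | (false, true, true, true), 4 => ((false, true, true, true), true)
  | (true, false, false, false), 0 => ((true, false, false, false), true)
  | (true, false, false, false), 1 => ((true, true, true, true), true)
  | (true, false, false, false), 2 => ((true, true, false, false), false)
  | (true, false, false, false), 3 => ((true, false, true, false), false)
  | (true, false, false, false), 4 => ((true, false, false, true), false)
  | (true, false, false, true), 0 => ((true, false, false, true), true)
  | (true, false, false, true), 1 => ((true, true, true, true), true)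
  | (true, false, false, true), 2 => ((true, true, false, false), false)
  | (true, false, false, true), 3 => ((true, false, true, true), false)
  | (true, false, false, true), 4 => ((true, false, true, true), true)
  | (true, false, true, false), 0 => ((true, false, true, false), true)
  | (true, false, true, false), 1 => ((true, true, true, true), true)
  | (true, false, true, false), 2 => ((true, true, false, false), false)
  | (true, false, true, false), 3 => ((true, false, true, true), true)
  | (true, false, true, false), 4 => ((true, false, true, true), false)
  | (true, false, true, true), 0 => ((true, false, true, true), true)
  | (true, false, true, true), 1 => ((true, true, true, true), true)
  | (true, false, true, true), 2 => ((true, true, false, false), false)
  | (true, false, true, true), 3 => ((true, false, true, true), true)
  | (true, false, true, true), 4 => ((true, false, true, true), true)
  | (true, true, false, false), 0 => ((true, true, false, false), true)
  | (true, true, false, false), 1 => ((true, true, true, true), true)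
  | (true, true, false, false), 2 => ((true, true, true, true), true)
  | (true, true, false, false), 3 => ((true, true, true, false), false)
  | (true, true, false, false), 4 => ((true, true, false, true), false)
  | (true, true, false, true), 0 => ((true, true, false, true), true)
  | (true, true, false, true), 1 => ((true, true, true, true), true)
  | (true, true, false, true), 2 => ((true, true, true, true), true)
  | (true, true, false, true), 3 => ((true, true, true, true), false)
  | (true, true, false, true), 4 => ((true, true, true, true), true)
  | (true, true, true, false), 0 => ((true, true, true, false), true)
  | (true, true, true, false), 1 => ((true, true, true, true), true)
  | (true, true, true, false), 2 => ((true, true, true, true), true)
  | (true, true, true, false), 3 => ((true, true, true, true), true)
  | (true, true, true, false), 4 => ((true, true, true, true), false)
  | (true, true, true, true), 0 => ((true, true, true, true), true)
  | (true, true, true, true), 1 => ((true, true, true, true), true)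
  | (true, true, true, true), 2 => ((true, true, true, true), true)
  | (true, true, true, true), 3 => ((true, true, true, true), true)
  | (true, true, true, true), 4 => ((true, true, true, true), true)
  | _, _ => ((false,false,false,false), true)
  end.
Definition states : seq state := [:: (false, false, false, false); (false, false, false, true); (false, false, true, false); (false, false, true, true); (false, true, false, false); (false, true, false, true); (false, true, true, false); (false, true, true, true); (true, false, false, false); (true, false, false, true); (true, false, true, false); (true, false, true, true); (true, true, false, false); (true, true, false, true); (true, true, true, false); (true, true, true, true)].
Fixpoint good (n : nat) (M : state) : bool :=
  match n with
  | 0 => false
  | n'.+1 => all (fun c => (table M c).2 || good n' (table M c).1) (iota 0 5)
  end.

Lemma uq_ok : all (fun y => has (fun x => (x \is a GRing.unit) && (y == x ^+ 2)) Zl) Qlist.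
Proof. Time vm_cast_no_check (erefl true). Time Qed.
Lemma table_ok : all (fun M => all (fun c => okT M c (table M c)) (iota 0 5)) states.
Proof. Time vm_cast_no_check (erefl true). Time Qed.
Lemma good9 : good 9 (false, false, false, false).
Proof. Time vm_cast_no_check (erefl true). Time Qed.


Lemma Q_us (q : 'Z_25) : q \in Qlist -> @unit_squares 25 q.
Proof.
move=> hq; have /hasP [x _ hx] := allP uq_ok q hq.
by apply/existsP; exists x.
Qed.

Lemma mem_states (M : state) : M \in states.
Proof. by case: M => [[[[] []] []] []]. Qed.

Lemma cls_lt (x : 'Z_25) : (cls x < 5)%N.
Proof. rewrite /cls /=; by repeat case: ifP. Qed.

Section Main.
Variable s : seq 'Z_25.

Definition blk (i j : nat) := drop i (take j s).

Definition ach (i j : nat) (v : 'Z_25) : Prop :=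
  exists a : seq 'Z_25, [/\ size a = size (blk i j), all (@unit_squares 25) a &
    \sum_(k < size (blk i j)) a`_k * (blk i j)`_k = v].

Lemma ach0 j : ach j j 0.
Proof.
have e : size (blk j j) = 0%N.
  rewrite /blk size_drop size_take; case: ifP => h; first by rewrite subnn.
  by apply/eqP; rewrite subn_eq0 leqNgt h.
exists [::]; split => //; by rewrite e ?big_ord0.
Qed.

Lemma ach_ext i j v q : (i <= j)%N -> (j < size s)%N -> ach i j v ->
  @unit_squares 25 q -> ach i j.+1 (v + q * nth 0 s j).
Proof.
move=> hij hj [a [ha1 ha2 ha3]] hq.
have eb : blk i j.+1 = rcons (blk i j) (nth 0 s j).
  rewrite /blk (take_nth 0 hj) drop_rcons // size_take hj //.
exists (rcons a q); split.
- by rewrite eb !size_rcons ha1.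
- by rewrite all_rcons hq ha2.
rewrite eb size_rcons big_ord_recr /= -ha3; congr (_ + _).
  apply: eq_bigr => k _; rewrite !nth_rcons ha1 ltn_ord //.
by rewrite !nth_rcons ha1 ltnn eqxx.
Qed.

Definition Ach j v := exists2 i, (i < j)%N & ach i j v.
Definition Inv j M := forall v, memS M (cls v) -> Ach j v.

Lemma cov_ach j M y t : Inv j M -> (j < size s)%N -> y = nth 0 s j ->
  covers M y t -> Ach j.+1 t.
Proof.
move=> hI hj -> /hasP [q hq /orP hD].
have ht : t = (t - q * nth 0 s j) + q * nth 0 s j by rewrite subrK.
case: hD => [/eqP h0 | hm].
  exists j => //; rewrite ht h0; apply: ach_ext => //; [exact: ach0 | exact: Q_us].
have [i hi ha] := hI _ hm.
exists i; first exact: ltnW.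
rewrite ht; apply: ach_ext => //; [exact: ltnW | exact: Q_us].
Qed.

Lemma main_ind n : forall M j, good n M -> Inv j M -> (j + n <= size s)%N ->
  exists i j', [/\ (i < j')%N, (j' <= size s)%N & ach i j' 0].
Proof.
elim: n => [//|n IH] M j hg hI hjn.
have hj : (j < size s)%N by apply: leq_trans hjn; rewrite addnS ltnS leq_addr.
set y := nth 0 s j.
have hc : cls y \in iota 0 5 by rewrite mem_iota /= cls_lt.
have /orP hgc := allP hg _ hc.
have hM : all (fun c => okT M c (table M c)) (iota 0 5) := allP table_ok _ (mem_states M).
have hM2 : okT M (cls y) (table M (cls y)) := allP hM _ hc.
have /implyP hok := allP hM2 y (mem_Zl y).
have /andP [hok1 /allP hok2] := hok (eqxx _).
case: hgc => [h2 | hgn].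
  have hcv := implyP hok1 h2.
  have [i hi ha] := cov_ach (t:=0) hI hj erefl hcv.
  by exists i, j.+1; split.
apply: (IH _ j.+1 hgn); last by rewrite addSnnS.
move=> v hv; apply: (cov_ach hI hj erefl).
exact: (implyP (hok2 v (mem_Zl v)) hv).
Qed.

End Main.

Theorem mainTheorem16 :
  @consec_wzs_property 25%N (@unit_squares 25%N) 9%N.
Proof.
move=> s hs.
have hI : Inv s 0 (false, false, false, false) by move=> v; case: (cls v) => [|[|[|[|[|?]]]]].
have hl : (0 + 9 <= size s)%N by rewrite hs.
have [i [j [h1 h2 h3]]] := @main_ind s 9 (false, false, false, false) 0 good9 hI hl.
exists i, j; split => //; first by rewrite -hs.
Qed.
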